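(* Let $k\ge2$, $K\ge1$ be integers, let $R\ge k$ be an integer and $L$ a positive integer divisible by $R^{K-1}$. For $A$ dividing $L$ let $f_A=(\mathsf{1}^A\mathsf{2}^A\cdots\mathsf{k}^A)^{L/A}\in[k]^{kL}$, and for a word $w$ over $[K]$ let $\hat w$ be the word over $[k]$ obtained by replacing each symbol $l\in[K]$ of $w$ by $f_{R^{l-1}}$. Let $w_1,w_2$ be words over $[K]$ and let $s=(w_1',w_2')$ be a badly-matched common subsequence between $\hat w_1$ and $\hat w_2$. Then \[\operatorname{span} w_1'+\operatorname{span} w_2'\ \ge\ \left(k+1-\frac kR-\frac{8R^{K-1}}{L}\right)\operatorname{len} s-16R^{K-1}.\]
   Context: $\alpha^A$ denotes letter $\alpha$ repeated $A$ times, and $u^m$ denotes $m$ concatenated copies of the word $u$. Symbols are distinguishable positions. If a symbol $x$ of $\hat w$ arises from expanding the symbol $y$ of $w$, then $y$ is the parent of $x$. A common subsequence of words $u_1,u_2$ is a pair $(u_1',u_2')$ of subsequences of $u_1,u_2$ that are equal as words, with length $\operatorname{len}$ their common length. For a common subsequence $(w_1',w_2')$ of $\hat w_1,\hat w_2$, its $i$-th symbol is well-matched if the parents of $w_1'[i]$ and $w_2'[i]$ are the same letter of $[K]$; the common subsequence is badly-matched if none of its symbols is well-matched. The span of a subsequence $w'$ in $w$ is the length of the shortest subword (block of consecutive symbols) of $w$ containing $w'$; $\operatorname{span} w_1'$ is taken in $\hat w_1$ and $\operatorname{span}w_2'$ in $\hat w_2$. *)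

(* Defs.v *)
From mathcomp Require Import all_boot all_order all_algebra.
Set Implicit Arguments. Unset Strict Implicit. Unset Printing Implicit Defensive.
Import Order.TTheory GRing.Theory Num.Theory.

(* Letters of [k] are the naturals 1..k; letters of [K] are 1..K. *)

Definition fword (k L A : nat) : seq nat :=
  flatten (nseq (L %/ A) (flatten [seq nseq A c | c <- iota 1 k])).

Definition hatw (k R L : nat) (w : seq nat) : seq nat :=
  flatten [seq fword k L (R ^ (l - 1)) | l <- w].

(* A subsequence of a word u is encoded by the strictly increasing sequence of
   its positions (symbols are positions) in u. *)
Definition is_subseq_pos (u : seq nat) (I : seq nat) : Prop :=
  sorted ltn I /\ all (fun i => i < size u) I.

Definition common_subseq (u1 u2 : seq nat) (I1 I2 : seq nat) : Prop :=
  [/\ is_subseq_pos u1 I1, is_subseq_pos u2 I2, size I1 = size I2 &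
      forall j, j < size I1 -> nth 0 u1 (nth 0 I1 j) = nth 0 u2 (nth 0 I2 j)].

(* the parent of position i of \hat w is the symbol of w at index i %/ (k L),
   since every block f_{R^(l-1)} has length kL *)
Definition parent_letter (k L : nat) (w : seq nat) (i : nat) : nat :=
  nth 0 w (i %/ (k * L)).

Definition badly_matched (k L : nat) (w1 w2 : seq nat) (I1 I2 : seq nat) : Prop :=
  forall j, j < size I1 ->
    parent_letter k L w1 (nth 0 I1 j) != parent_letter k L w2 (nth 0 I2 j).

Definition wspan (I : seq nat) : nat :=
  if I is i :: _ then (last i I - i).+1 else 0.

(* Main.v *)
Require Import Defs.
From mathcomp Require Import all_boot all_order all_algebra.
From mathcomp Require Import zify ring lra.

Lemma nth_flatten_const (T : Type) (x0 : T) n (ss : seq (seq T)) i :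
  all (fun s => size s == n) ss -> i < n * size ss ->
  nth x0 (flatten ss) i = nth x0 (nth [::] ss (i %/ n)) (i %% n).
Proof.
elim: ss i => [|s ss IH] i /=; first by rewrite muln0.
move=> /andP[/eqP hs hall] hi.
rewrite nth_cat hs.
case: (ltnP i n) => hin.
  by rewrite divn_small // modn_small.
have hn : 0 < n by rewrite lt0n; apply/eqP => h; move: hi; rewrite h mul0n.
have -> : i = (i - n) + n by rewrite subnK.
rewrite addnK divnDr ?dvdnn // divnn hn addn1 /= modnDr.
apply: IH => //.
rewrite mulnS in hi. lia.
Qed.

Lemma size_flatten_const (T : Type) n (ss : seq (seq T)) :
  all (fun s => size s == n) ss -> size (flatten ss) = n * size ss.
Proof.
elim: ss => [|s ss IH] /=; first by rewrite muln0.
by move=> /andP[/eqP hs hall]; rewrite size_cat hs IH // mulnS.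
Qed.

Lemma size_inner k A : size (flatten [seq nseq A c | c <- iota 1 k]) = A * k.
Proof.
rewrite (@size_flatten_const _ A) ?size_map ?size_iota //.
by apply/allP => s /mapP[c _ ->]; rewrite size_nseq.
Qed.

Lemma mul_div_aux k L A : A %| L -> A * k * (L %/ A) = k * L.
Proof. by move=> h; rewrite mulnC mulnA divnK // mulnC. Qed.

Lemma size_fword k L A : 0 < A -> A %| L -> size (fword k L A) = k * L.
Proof.
move=> hA hAL; rewrite /fword (@size_flatten_const _ (A * k)).
  by rewrite size_nseq mul_div_aux.
by apply/allP => s; rewrite mem_nseq => /andP[_ /eqP ->]; rewrite size_inner.
Qed.

Lemma nth_fword k L A i : 0 < A -> A %| L -> i < k * L ->
  nth 0 (fword k L A) i = (i %/ A) %% k + 1.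
Proof.
move=> hA hAL hi.
rewrite /fword (@nth_flatten_const _ _ (A * k)); last first.
  by rewrite size_nseq mul_div_aux.
  by apply/allP => s; rewrite mem_nseq => /andP[_ /eqP ->]; rewrite size_inner.
rewrite nth_nseq.
have hk : 0 < k by rewrite lt0n; apply/eqP => h; move: hi; rewrite h mul0n.
have hAk : 0 < A * k by rewrite muln_gt0 hA.
have -> : i %/ (A * k) < L %/ A.
  by rewrite ltn_divLR // mulnA divnK // mulnC.
rewrite (@nth_flatten_const _ _ A); last first.
  by rewrite size_map size_iota ltn_pmod.
  by apply/allP => s /mapP[c _ ->]; rewrite size_nseq.
rewrite (nth_map 0); last by rewrite size_iota ltn_divLR // [k * A]mulnC ltn_pmod.
rewrite nth_nseq ltn_pmod // nth_iota; last by rewrite ltn_divLR // [k * A]mulnC ltn_pmod.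
by rewrite modn_divl mulnC addnC.
Qed.

Lemma size_hatw k R L w : 0 < R -> (forall l, l \in w -> R ^ (l - 1) %| L) ->
  size (hatw k R L w) = k * L * size w.
Proof.
move=> hR hw; rewrite /hatw (@size_flatten_const _ (k * L)) ?size_map //.
apply/allP => s /mapP[l hl ->]; rewrite size_fword ?expn_gt0 ?hR //.
exact: hw.
Qed.

Lemma nth_hatw k R L w p : 0 < R -> (forall l, l \in w -> R ^ (l - 1) %| L) ->
  p < k * L * size w ->
  nth 0 (hatw k R L w) p = (p %/ R ^ (parent_letter k L w p - 1)) %% k + 1.
Proof.
move=> hR hw hp.
have hkL : 0 < k * L by rewrite lt0n; apply/eqP => h; move: hp; rewrite h mul0n.
have hj : p %/ (k * L) < size w by rewrite ltn_divLR // mulnC.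
rewrite /hatw (@nth_flatten_const _ _ (k * L)) ?size_map //; last first.
  apply/allP => s /mapP[l hl ->]; rewrite size_fword ?expn_gt0 ?hR //.
  exact: hw.
rewrite (nth_map 0) // /parent_letter.
set l := nth 0 w _.
have hl : l \in w by apply: mem_nth.
have hA : 0 < R ^ (l - 1) by rewrite expn_gt0 hR.
rewrite nth_fword ?ltn_pmod //; last exact: hw.
rewrite !modn_divl; congr (_ %/ _ + 1).
apply: modn_dvdm. by apply: dvdn_mul => //; apply: hw.
Qed.

Lemma stepA k A p p' : 0 < k -> 0 < A -> p < p' ->
  (p %/ A == p' %/ A) || ((p %/ A) %% k == (p' %/ A) %% k) ->
  p + (k - 1) * (p %% A) + k <= p' + (k - 1) * (p' %% A).
Proof.
move=> hk hA hpp h.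
have ep := divn_eq p A; have ep' := divn_eq p' A.
have ho := ltn_pmod p hA; have ho' := ltn_pmod p' hA.
set r := p %/ A in ep h *; set r' := p' %/ A in ep' h *.
set o := p %% A in ep ho *; set o' := p' %% A in ep' ho' *.
have hrr : r <= r' by rewrite /r /r' leq_div2r // ltnW.
case: (eqVneq r r') => [e|ne].
  subst r'. have : o < o' by lia. nia.
move: h; rewrite (negPf ne) /= => /eqP h.
have hlt : r < r' by rewrite ltn_neqAle ne.
have : k <= r' - r.
  apply: dvdn_leq; first by lia.
  by rewrite -eqn_mod_dvd ?h.
move=> hkr.
have : r' * A >= r * A + k * A by rewrite -mulnDl leq_mul2r; apply/orP; right; lia.
nia.
Qed.

Lemma stepA' k A p p' : 0 < k -> 0 < A -> p < p' ->
  p + (k - 1) * (p %% A) + k <= p' + (k - 1) * (p' %% A) + (k - 1) * A.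
Proof.
move=> hk hA hpp.
have ho := ltn_pmod p hA.
nia.
Qed.

Lemma stepB k R B q q' : k <= R -> 0 < B -> q < q' ->
  R * q + k * (q' %% B) + (R - k) + (if q %/ B == q' %/ B then 0 else k * B)
   <= R * q' + k * (q %% B).
Proof.
move=> hkR hB hqq.
have ep := divn_eq q B; have ep' := divn_eq q' B.
have ho := ltn_pmod q hB; have ho' := ltn_pmod q' hB.
set r := q %/ B in ep *; set r' := q' %/ B in ep' *.
set o := q %% B in ep ho *; set o' := q' %% B in ep' ho' *.
have hrr : r <= r' by rewrite /r /r' leq_div2r // ltnW.
case: (eqVneq r r') => [e|ne].
  subst r'. have : o < o' by lia. nia.
have hlt : r + 1 <= r' by lia.
have : r' * B >= r * B + B by rewrite -{2}[B]mul1n -mulnDl leq_mul2r hlt orbT.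
nia.
Qed.

Lemma step_same k R A B p p' q q' : 0 < k -> k <= R -> 0 < A -> R * A <= B ->
  p < p' -> q < q' -> (p %/ A) %% k = (q %/ B) %% k -> (p' %/ A) %% k = (q' %/ B) %% k ->
  R * p + R * ((k - 1) * (p %% A)) + R * q + k * (q' %% B) + (R * (k + 1) - k)
  <= R * p' + R * ((k - 1) * (p' %% A)) + R * q' + k * (q %% B).
Proof.
move=> hk hkR hA hRA hp hq e1 e2.
have hB : 0 < B by apply: leq_trans hRA; rewrite muln_gt0 hA (leq_trans hk hkR).
have Y := @stepB k R B q q' hkR hB hq.
have hRk : R * (k + 1) - k = R * k + (R - k) by rewrite mulnDr muln1 addnBA.
rewrite hRk.
case: (eqVneq (q %/ B) (q' %/ B)) Y => [eq|ne] Y.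
  have X : p + (k - 1) * (p %% A) + k <= p' + (k - 1) * (p' %% A).
    by apply: stepA => //; rewrite e1 e2 eq eqxx orbT.
  have X' := leq_mul2l R (p + (k - 1) * (p %% A) + k) (p' + (k - 1) * (p' %% A)).
  rewrite X orbT in X'.
  rewrite !mulnDr addn0 in X' Y.
  move: X' Y.
  generalize (R * p) (R * p') (R * q) (R * q') (R * ((k - 1) * (p %% A)))
    (R * ((k - 1) * (p' %% A))) (k * (q %% B)) (k * (q' %% B)) (R * k) (R - k).
  move=> ? ? ? ? ? ? ? ? ? ? X'' Y'; clear -X'' Y'; lia.
have X := @stepA' k A p p' hk hA hp.
have X' := leq_mul2l R (p + (k - 1) * (p %% A) + k) (p' + (k - 1) * (p' %% A) + (k - 1) * A).
rewrite X orbT !mulnDr in X'.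
have hh : R * ((k - 1) * A) <= k * B.
  rewrite mulnCA; apply: leq_mul; first exact: leq_subr.
  exact: hRA.
move: X' Y hh.
generalize (R * p) (R * p') (R * q) (R * q') (R * ((k - 1) * (p %% A)))
    (R * ((k - 1) * (p' %% A))) (k * (q %% B)) (k * (q' %% B)) (R * k) (R - k)
    (R * ((k - 1) * A)) (k * B).
move=> ? ? ? ? ? ? ? ? ? ? ? ? X'' Y' hh'; clear -X'' Y' hh'; lia.
Qed.

Lemma AB_facts R K l1 l2 : 1 < R -> 0 < l1 <= K -> 0 < l2 <= K -> l1 != l2 ->
  [/\ R ^ (l1 - 1) != R ^ (l2 - 1),
   (R ^ (l1 - 1) < R ^ (l2 - 1) -> R * R ^ (l1 - 1) <= R ^ (l2 - 1)),
   (R ^ (l2 - 1) < R ^ (l1 - 1) -> R * R ^ (l2 - 1) <= R ^ (l1 - 1))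
   & R <= R ^ (K - 1)].
Proof.
move=> hR /andP[h1 h1K] /andP[h2 h2K] hne.
have hR0 : 0 < R by lia.
split.
- by rewrite eqn_exp2l //; apply: contra hne => /eqP h; apply/eqP; lia.
- by rewrite ltn_exp2l // => h; rewrite -expnS leq_pexp2l //; lia.
- by rewrite ltn_exp2l // => h; rewrite -expnS leq_pexp2l //; lia.
- by rewrite -{1}(expn1 R) leq_pexp2l //; lia.
Qed.

Lemma A_facts R K l : 1 < R -> 0 < l <= K -> 0 < R ^ (l - 1) /\ R ^ (l - 1) <= R ^ (K - 1).
Proof.
move=> hR /andP[h1 h1K]; have hR0 : 0 < R by lia.
by rewrite expn_gt0 hR0 leq_pexp2l //; lia.
Qed.

Lemma wspan_nth I : 0 < size I -> wspan I = (nth 0 I (size I).-1 - nth 0 I 0).+1.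
Proof.
case: I => // i I' _ /=.
by rewrite (last_nth 0).
Qed.

Import Order.TTheory GRing.Theory Num.Theory.
Local Open Scope ring_scope.

Definition phi (R k A B p q : nat) : rat :=
  if (A < B)%N then (R * ((k - 1) * (p %% A)))%:R - (k * (q %% B))%:R
  else (R * ((k - 1) * (q %% B)))%:R - (k * (p %% A))%:R.

Lemma phi_bound_aux (R k A B M p q : nat) : (0 < A)%N -> (0 < B)%N -> (R * A <= B)%N -> (B <= M)%N ->
  (R * ((k - 1) * (p %% A)) <= k * M)%N /\ (k * (q %% B) <= k * M)%N.
Proof.
move=> hA hB hRA hBM.
split.
  have h1 := ltn_pmod p hA.
  apply: (@leq_trans ((k - 1) * (R * A))).
    rewrite mulnCA leq_mul2l; apply/orP; right; rewrite leq_mul2l; apply/orP; right; exact: ltnW.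
  apply: leq_mul; first exact: leq_subr.
  exact: leq_trans hRA hBM.
rewrite leq_mul2l; apply/orP; right.
exact: leq_trans (ltnW (ltn_pmod q hB)) hBM.
Qed.

Lemma phi_bound (R k A B M p q : nat) : (0 < A)%N -> (0 < B)%N -> A != B ->
  ((A < B)%N -> (R * A <= B)%N) -> ((B < A)%N -> (R * B <= A)%N) ->
  (A <= M)%N -> (B <= M)%N ->
  - (k * M)%:R <= phi R k A B p q <= (k * M)%:R.
Proof.
move=> hA hB hne hAB hBA hAM hBM; rewrite /phi.
case: ifP => hlt.
  have [h1 h2] := @phi_bound_aux R k A B M p q hA hB (hAB hlt) hBM.
  have h1' : (R * ((k - 1) * (p %% A)))%:R <= (k * M)%:R :> rat by rewrite ler_nat.
  have h2' : (k * (q %% B))%:R <= (k * M)%:R :> rat by rewrite ler_nat.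
  have := ler0n rat (R * ((k - 1) * (p %% A))); have := ler0n rat (k * (q %% B)).
  move=> *; apply/andP; split; lra.
have hlt' : (B < A)%N by rewrite ltn_neqAle eq_sym hne leqNgt hlt.
have [h1 h2] := @phi_bound_aux R k B A M q p hB hA (hBA hlt') hAM.
have h1' : (R * ((k - 1) * (q %% B)))%:R <= (k * M)%:R :> rat by rewrite ler_nat.
have h2' : (k * (p %% A))%:R <= (k * M)%:R :> rat by rewrite ler_nat.
have := ler0n rat (R * ((k - 1) * (q %% B))); have := ler0n rat (k * (p %% A)).
move=> *; apply/andP; split; lra.
Qed.

Lemma phi_step (R k A B p p' q q' : nat) : (0 < k)%N -> (k <= R)%N -> (0 < A)%N -> (0 < B)%N -> A != B ->
  ((A < B)%N -> (R * A <= B)%N) -> ((B < A)%N -> (R * B <= A)%N) ->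
  (p < p')%N -> (q < q')%N -> ((p %/ A) %% k = (q %/ B) %% k)%N -> ((p' %/ A) %% k = (q' %/ B) %% k)%N ->
  (R * (k + 1) - k)%:R + phi R k A B p q + (R * (p + q))%:R <= (R * (p' + q'))%:R + phi R k A B p' q'.
Proof.
move=> hk hkR hA hB hne hAB hBA hp hq e1 e2; rewrite /phi [(R * (p + q))%N]mulnDr [(R * (p' + q'))%N]mulnDr !natrD.
case: ifP => hlt.
  have := @step_same k R A B p p' q q' hk hkR hA (hAB hlt) hp hq e1 e2.
  rewrite -(ler_nat rat) !natrD => h. lra.
have hlt' : (B < A)%N by rewrite ltn_neqAle eq_sym hne leqNgt hlt.
have := @step_same k R B A q q' p p' hk hkR hB (hBA hlt') hq hp (esym e1) (esym e2).
rewrite -(ler_nat rat) !natrD => h. lra.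
Qed.

Lemma final_ineq (k R M L m S e c : rat) : 2 <= k -> k <= R -> k <= M -> 0 < L -> 0 <= m -> 0 <= S ->
  c = R * (k + 1) - k ->
  c * (m - 1) - 4 * R * M * e - 2 * k * M <= R * (S - 2) ->
  k * L * e <= S - 2 + 2 * k * L ->
  (k + 1 - k / R - 8 * M / L) * m - 16 * M <= S.
Proof.
move=> hk hkR hkM hL hm hS hc h1 h2.
have hR : 0 < R by lra.
set x := k + 1 - k / R.
have hxc : c = R * x by rewrite /x hc; field; lra.
have hx1 : x <= k + 1.
  rewrite /x; have : 0 <= k / R by apply: divr_ge0; lra. lra.
have hkR' : k / R <= 1 by rewrite ler_pdivrMr // mul1r.
have hkMR : k * M / R <= M.
  by rewrite ler_pdivrMr // mulrC ler_wpM2l //; lra.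
have hA : x * m - x + 2 - 4 * M * e - 2 * M <= S.
  have : x * (m - 1) - 4 * M * e - 2 * (k * M / R) <= S - 2.
    rewrite -(ler_pM2l hR).
    have -> : R * (x * (m - 1) - 4 * M * e - 2 * (k * M / R))
      = R * x * (m - 1) - 4 * R * M * e - 2 * k * M by field; lra.
    by rewrite -hxc.
  lra.
set y := M * m / L.
have hyL : y * L = M * m by rewrite /y divfK //; lra.
have hy0 : 0 <= y by rewrite /y; apply: divr_ge0; [apply: mulr_ge0|]; lra.
have -> : (x - 8 * M / L) * m - 16 * M = x * m - 8 * y - 16 * M.
  by rewrite /y; field; lra.
case: (lerP (x * m - 8 * y - 16 * M) (k * L * (e - 2))) => hc2.
  lra.
have h3 : k * L * (e - 2) < (k + 1) * m.
  have : x * m <= (k + 1) * m by apply: ler_wpM2r.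
  lra.
have h4 : L * (e - 2) * 2 < 3 * m.
  have : k * (L * (e - 2) * 2) < k * (3 * m).
    have : (k + 1) * m * 2 <= k * (3 * m) by nra.
    nra.
  rewrite ltr_pM2l //; lra.
have h5 : M * (e - 2) * 2 <= 3 * y.
  rewrite -(ler_pM2r hL).
  have -> : 3 * y * L = 3 * (M * m) by rewrite -hyL; ring.
  have : 0 <= M by lra.
  nra.
nra.
Qed.

Theorem lemma3p4 (k K R L : nat) (w1 w2 I1 I2 : seq nat) :
  (2 <= k)%N -> (1 <= K)%N -> (k <= R)%N -> (0 < L)%N -> (R ^ (K - 1) %| L)%N ->
  all (fun l => 0 < l <= K)%N w1 -> all (fun l => 0 < l <= K)%N w2 ->
  common_subseq (hatw k R L w1) (hatw k R L w2) I1 I2 ->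
  badly_matched k L w1 w2 I1 I2 ->
  ((k%:R + 1 - k%:R / R%:R - 8 * (R ^ (K - 1))%:R / L%:R) * (size I1)%:R
     - 16 * (R ^ (K - 1))%:R : rat)
  <= (wspan I1 + wspan I2)%:R.
Proof.
move=> hk hK hkR hL hML hw1 hw2 [[hs1 hb1] [hs2 hb2] hsz heq] hbad.
set M := (R ^ (K - 1))%N.
have hR : (1 < R)%N by apply: leq_trans hkR.
have hR0 : (0 < R)%N by apply: ltnW.
have hk0 : (0 < k)%N by apply: ltnW.
have hdiv : forall w, all (fun l => 0 < l <= K)%N w -> forall l, l \in w -> (R ^ (l - 1) %| L)%N.
  move=> w hw l hl; have /andP[h1 h2] := allP hw l hl.
  apply: dvdn_trans hML; apply: dvdn_exp2l; lia.
set m := size I1.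
have hM0 : 0 <= M%:R :> rat by apply: ler0n.
have hS0 : 0 <= (wspan I1 + wspan I2)%:R :> rat by apply: ler0n.
case: (posnP m) => hm.
  rewrite hm mulr0 sub0r. lra.
pose P j := nth 0 I1 j; pose Q j := nth 0 I2 j.
pose l1 j := parent_letter k L w1 (P j); pose l2 j := parent_letter k L w2 (Q j).
pose A j := (R ^ (l1 j - 1))%N; pose B j := (R ^ (l2 j - 1))%N.
pose b1 j := (P j %/ (k * L))%N; pose b2 j := (Q j %/ (k * L))%N.
have hkL : (0 < k * L)%N by rewrite muln_gt0 hk0.
have hPs : forall j, (j < m)%N -> (P j < k * L * size w1)%N.
  move=> j hj; rewrite -(@size_hatw k R L w1 hR0 (hdiv w1 hw1)).
  exact: (allP hb1) _ (mem_nth 0 hj).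
have hQs : forall j, (j < m)%N -> (Q j < k * L * size w2)%N.
  move=> j hj; rewrite -(@size_hatw k R L w2 hR0 (hdiv w2 hw2)).
  by apply: (allP hb2); apply: mem_nth; rewrite -hsz.
have hl1 : forall j, (j < m)%N -> (0 < l1 j <= K)%N.
  move=> j hj; apply: (allP hw1); apply: mem_nth.
  by rewrite ltn_divLR // mulnC hPs.
have hl2 : forall j, (j < m)%N -> (0 < l2 j <= K)%N.
  move=> j hj; apply: (allP hw2); apply: mem_nth.
  by rewrite ltn_divLR // mulnC hQs.
have hlet : forall j, (j < m)%N -> ((P j %/ A j) %% k = (Q j %/ B j) %% k)%N.
  move=> j hj; have := heq j hj.
  rewrite (@nth_hatw k R L w1 (P j) hR0 (hdiv w1 hw1) (hPs j hj)) (@nth_hatw k R L w2 (Q j) hR0 (hdiv w2 hw2) (hQs j hj)).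
  by move/addIn.
have hne : forall j, (j < m)%N -> l1 j != l2 j by move=> j hj; exact: hbad.
have hAB : forall j, (j < m)%N -> [/\ A j != B j,
   (A j < B j -> R * A j <= B j)%N, (B j < A j -> R * B j <= A j)%N & (R <= M)%N].
  by move=> j hj; apply: AB_facts => //; [apply: hl1 | apply: hl2 | apply: hne].
have hA : forall j, (j < m)%N -> (0 < A j)%N /\ (A j <= M)%N.
  by move=> j hj; apply: A_facts => //; apply: hl1.
have hB : forall j, (j < m)%N -> (0 < B j)%N /\ (B j <= M)%N.
  by move=> j hj; apply: A_facts => //; apply: hl2.
have hRM : (R <= M)%N by case: (hAB 0%N hm).
have hkM : (k <= M)%N by apply: leq_trans hRM.
have hPlt : forall j, (j.+1 < m)%N -> (P j < P j.+1)%N.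
  move=> j hj; apply: (sorted_ltn_nth ltn_trans 0 hs1); rewrite ?inE //; lia.
have hQlt : forall j, (j.+1 < m)%N -> (Q j < Q j.+1)%N.
  move=> j hj; apply: (sorted_ltn_nth ltn_trans 0 hs2); rewrite ?inE -?hsz //; lia.
pose c : rat := (R * (k + 1) - k)%:R.
pose F j : rat := (R * (P j + Q j))%:R + phi R k (A j) (B j) (P j) (Q j) - c * j%:R
   + (4 * R * M * (b1 j + b2 j))%:R.
have hphi : forall j, (j < m)%N ->
    - (k * M)%:R <= phi R k (A j) (B j) (P j) (Q j) <= (k * M)%:R.
  move=> j hj; have [h1 h2 h3 h4] := hAB j hj.
  have [h5 h6] := hA j hj; have [h7 h8] := hB j hj.
  exact: phi_bound.
have hc4 : (R * (k + 1) - k + (k * M + k * M) <= 4 * R * M)%N.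
  clear -hkR hkM hRM hR; nia.
have hmono : forall j, (j.+1 < m)%N -> F j <= F j.+1.
  move=> j hj; have hj0 : (j < m)%N by apply: ltnW.
  have hb1m : (b1 j <= b1 j.+1)%N by apply: leq_div2r; apply: ltnW; apply: hPlt.
  have hb2m : (b2 j <= b2 j.+1)%N by apply: leq_div2r; apply: ltnW; apply: hQlt.
  have hjS : (j.+1)%:R = j%:R + 1 :> rat by rewrite -natr1.
  case: (boolP ((b1 j == b1 j.+1) && (b2 j == b2 j.+1))) => [/andP[/eqP e1 /eqP e2] | hneq].
    have el1 : l1 j.+1 = l1 j.
      by rewrite /l1 /parent_letter; congr (nth 0 w1 _); exact: (esym e1).
    have el2 : l2 j.+1 = l2 j.
      by rewrite /l2 /parent_letter; congr (nth 0 w2 _); exact: (esym e2).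
    have eA : A j.+1 = A j by rewrite /A el1.
    have eB : B j.+1 = B j by rewrite /B el2.
    have [h1 h2 h3 h4] := hAB j hj0.
    have [h5 h6] := hA j hj0; have [h7 h8] := hB j hj0.
    have hl' := hlet j.+1 hj; rewrite eA eB in hl'.
    have := @phi_step R k (A j) (B j) (P j) (P j.+1) (Q j) (Q j.+1) hk0 hkR h5 h7 h1 h2 h3 (hPlt j hj) (hQlt j hj) (hlet j hj0) hl'.
    rewrite /F -e1 -e2 eA eB hjS /c. move=> h. lra.
  have hbs : (4 * R * M * (b1 j + b2 j) + 4 * R * M <= 4 * R * M * (b1 j.+1 + b2 j.+1))%N.
    rewrite -mulnSr leq_mul2l; apply/orP; right.
    move: hneq; clear -hb1m hb2m; rewrite negb_and; lia.
  have hPQ : (R * (P j + Q j) <= R * (P j.+1 + Q j.+1))%N.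
    rewrite leq_mul2l; apply/orP; right; apply: leq_add; apply: ltnW; [apply: hPlt|apply: hQlt]; done.
  have := hphi j hj0; have := hphi j.+1 hj.
  move: hbs hPQ hc4; rewrite -!(ler_nat rat) !natrD => hbs hPQ hc4' /andP[ha hb] /andP[hc hd].
  rewrite /F hjS /c. lra.
have htel : forall j, (j < m)%N -> F 0%N <= F j.
  elim => [//|j IH hj]; exact: le_trans (IH (ltnW hj)) (hmono j hj).
have hP0 : forall j, (j < m)%N -> (P 0%N <= P j)%N.
  elim => [//|j IH hj]; exact: leq_trans (IH (ltnW hj)) (ltnW (hPlt j hj)).
have hQ0 : forall j, (j < m)%N -> (Q 0%N <= Q j)%N.
  elim => [//|j IH hj]; exact: leq_trans (IH (ltnW hj)) (ltnW (hQlt j hj)).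
set n := m.-1.
have hn : (n < m)%N by rewrite /n prednK.
have hFn := htel n hn.
have hs1' : wspan I1 = (P n - P 0%N).+1 by rewrite wspan_nth.
have hs2' : wspan I2 = (Q n - Q 0%N).+1 by rewrite wspan_nth -hsz.
have hPn := hP0 n hn; have hQn := hQ0 n hn.
have hk1 : (k * L * b1 n <= P n)%N by rewrite mulnC leq_divM.
have hk2 : (k * L * b2 n <= Q n)%N by rewrite mulnC leq_divM.
have hk3 : (P 0%N < k * L * (b1 0%N).+1)%N by rewrite mulnC ltn_ceil.
have hk4 : (Q 0%N < k * L * (b2 0%N).+1)%N by rewrite mulnC ltn_ceil.
have hnm : n%:R = m%:R - 1 :> rat by rewrite /n -subn1 natrB.
have [ha0 hb0] := andP (hphi 0%N hm); have [ha1 hb1'] := andP (hphi n hn).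
rewrite hs1' hs2'.
apply: (@final_ineq k%:R R%:R M%:R L%:R m%:R _ ((b1 n + b2 n)%:R - (b1 0%N + b2 0%N)%:R) c).
- by rewrite ler_nat.
- by rewrite ler_nat.
- by rewrite ler_nat.
- by rewrite ltr0n.
- by apply: ler0n.
- by apply: ler0n.
- by rewrite /c natrB ?natrM ?natrD //; clear -hkR; nia.
- have eS : ((P n - P 0%N).+1 + (Q n - Q 0%N).+1)%:R
      = (P n)%:R - (P 0%N)%:R + (Q n)%:R - (Q 0%N)%:R + 2 :> rat.
    by rewrite natrD -!natr1 !natrB //; ring.
  rewrite eS.
  move: hFn; rewrite /F hnm !natrM !natrD mulr0 => hFn.
  lra.
- have eS : ((P n - P 0%N).+1 + (Q n - Q 0%N).+1)%:R
      = (P n)%:R - (P 0%N)%:R + (Q n)%:R - (Q 0%N)%:R + 2 :> rat.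
    by rewrite natrD -!natr1 !natrB //; ring.
  rewrite eS.
  move: hk1 hk2 hk3 hk4; rewrite -!(ler_nat rat) -!natr1 !natrM !natrD -!natr1.
  move=> h1 h2 h3 h4. lra.
Qed.
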